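(* Let $K\in\{\mathbb R,\mathbb C,\mathbb H\}$ and let $(E,d)$ be a metric vector space over $K$ such that $d$ is asymptotically multiplicative, unbounded on every non-trivial linear subspace, and such that for every $C_1>1$ there exists $C_0\ge0$ with $d\big(\sum_{i=1}^n x_i,\sum_{i=1}^n y_i\big)\le C_1\sum_{i=1}^n d(x_i,y_i)+nC_0$ for all $n\ge2$ and $x_1,\dots,x_n,y_1,\dots,y_n\in E$. Let $d_0(x,y)=\int_{\mathbb U}d(ux,uy)\,d\mu(u)$ and $\delta_0(x,y)=\lim_{n\to+\infty}\frac1n d_0(nx,ny)$. Then $\delta_0$ is translation invariant, i.e. $\delta_0(x+z,y+z)=\delta_0(x,y)$ for all $x,y,z\in E$, and setting $\|x-y\|=\delta_0(x,y)$ defines a norm $\|\cdot\|$ on $E$ such that the distance $\|x-y\|$ is asymptotically isometric to $d_0$ and to $d$.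
   Context: A metric vector space is a topological vector space over $K$ whose topology is generated by the metric $d$. $\mathbb U=\{u\in K:|u|=1\}$, $\mu$ the right-invariant Haar probability measure on $\mathbb U$. $d$ is asymptotically multiplicative if for every $C_1>1$ there exist $C_2,C_3\ge0$ with $C_1^{-1}|\lambda|d(x,y)-C_2|\lambda|-C_3\le d(\lambda x,\lambda y)\le C_1|\lambda|d(x,y)+C_2|\lambda|+C_3$ for all $\lambda\in K$, $x,y\in E$. A distance $\rho$ is asymptotically isometric to a distance $\sigma$ if for every $A>1$ there is $B\ge0$ with $A^{-1}\sigma-B\le\rho\le A\sigma+B$ pointwise. (Under these hypotheses the limit defining $\delta_0$ exists.) *)

(* Defs.v *)
From mathcomp Require Import all_boot all_order all_algebra.
From mathcomp Require Import all_classical all_reals all_analysis.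
Set Implicit Arguments. Unset Strict Implicit. Unset Printing Implicit Defensive.
Import Order.TTheory GRing.Theory Num.Theory numFieldTopology.Exports numFieldNormedType.Exports.
Local Open Scope ring_scope.
Local Open Scope classical_set_scope.

(* The scalar "field" K in {R, C, H}, given concretely over a real     *)
(* closed field R : realType as R, R^2 (complex product) and R^4       *)
(* (Hamilton product), each with its Euclidean absolute value and its  *)
(* Borel (= product) sigma-algebra.                                    *)
Record scalars (R : realType) := Scalars {
  sc_disp : measure_display;
  sc_type : measurableType sc_disp;
  sc_zero : sc_type;
  sc_one  : sc_type;
  sc_add  : sc_type -> sc_type -> sc_type;
  sc_opp  : sc_type -> sc_type;
  sc_mul  : sc_type -> sc_type -> sc_type;
  sc_abs  : sc_type -> R }.

Section Scalars.
Variable R : realType.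

Definition real_scalars : scalars R :=
  @Scalars R _ (R : measurableType _) 0 1 +%R -%R *%R (fun x : R => `|x|).

(* complex numbers a + b i as pairs (a, b) *)
Definition cmul (z w : R * R) : R * R :=
  (z.1 * w.1 - z.2 * w.2, z.1 * w.2 + z.2 * w.1).
Definition complex_scalars : scalars R :=
  @Scalars R _ ((R * R)%type : measurableType _) (0, 0) (1, 0)
    (fun z w => (z.1 + w.1, z.2 + w.2)) (fun z => (- z.1, - z.2)) cmul
    (fun z => Num.sqrt (z.1 ^+ 2 + z.2 ^+ 2)).

(* quaternions a + b i + c j + d k as ((a, b), (c, d)) *)
Definition qmul (p q : (R * R) * (R * R)) : (R * R) * (R * R) :=
  let: ((a1, b1), (c1, d1)) := p in
  let: ((a2, b2), (c2, d2)) := q in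
  ((a1 * a2 - b1 * b2 - c1 * c2 - d1 * d2,
    a1 * b2 + b1 * a2 + c1 * d2 - d1 * c2),
   (a1 * c2 - b1 * d2 + c1 * a2 + d1 * b2,
    a1 * d2 + b1 * c2 - c1 * b2 + d1 * a2)).
Definition qadd (p q : (R * R) * (R * R)) : (R * R) * (R * R) :=
  ((p.1.1 + q.1.1, p.1.2 + q.1.2), (p.2.1 + q.2.1, p.2.2 + q.2.2)).
Definition qopp (p : (R * R) * (R * R)) : (R * R) * (R * R) :=
  ((- p.1.1, - p.1.2), (- p.2.1, - p.2.2)).
Definition qabs (p : (R * R) * (R * R)) : R :=
  Num.sqrt (p.1.1 ^+ 2 + p.1.2 ^+ 2 + p.2.1 ^+ 2 + p.2.2 ^+ 2).
Definition quaternion_scalars : scalars R :=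
  @Scalars R _ (((R * R) * (R * R))%type : measurableType _)
    ((0, 0), (0, 0)) ((1, 0), (0, 0)) qadd qopp qmul qabs.

End Scalars.

Inductive scalar_kind := K_real | K_complex | K_quaternion.

Definition scal (R : realType) (k : scalar_kind) : scalars R :=
  match k with
  | K_real => real_scalars R
  | K_complex => complex_scalars R
  | K_quaternion => quaternion_scalars R
  end.

Section Defs.
Variables (R : realType) (K : scalars R) (E : zmodType).
Notation KT := (sc_type K).
Variable act : KT -> E -> E.
Variable d : E -> E -> R.

Definition is_left_module : Prop :=
  [/\ forall a x y, act a (x + y) = act a x + act a y,
      forall a b x, act (sc_add a b) x = act a x + act b x,
      forall a b x, act (sc_mul a b) x = act a (act b x) &
      forall x, act (sc_one K) x = x].

Definition is_metric : Prop :=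
  [/\ forall x y, 0 <= d x y,
      forall x y, d x y = 0 <-> x = y,
      forall x y, d x y = d y x &
      forall x y z, d x z <= d x y + d y z].

Definition kdist (a b : KT) : R := sc_abs (sc_add a (sc_opp b)).

Definition metric_vector_space : Prop :=
  [/\ is_left_module, is_metric,
      (forall x y (e : R), 0 < e -> exists2 del : R, 0 < del &
         forall x' y', d x x' < del -> d y y' < del -> d (x + y) (x' + y') < e) &
      (forall a x (e : R), 0 < e -> exists2 del : R, 0 < del &
         forall a' x', kdist a a' < del -> d x x' < del ->
           d (act a x) (act a' x') < e)].

Definition asymptotically_multiplicative : Prop :=
  forall C1 : R, 1 < C1 -> exists C2 C3 : R, [/\ 0 <= C2, 0 <= C3 &
    forall (l : KT) x y,
      C1^-1 * sc_abs l * d x y - C2 * sc_abs l - C3 <= d (act l x) (act l y)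
      /\ d (act l x) (act l y) <= C1 * sc_abs l * d x y + C2 * sc_abs l + C3].

Definition linear_subspace (F : set E) : Prop :=
  [/\ F 0, (forall x y, F x -> F y -> F (x + y)) &
      (forall a x, F x -> F (act a x))].

Definition unbounded_on_nontrivial_subspaces : Prop :=
  forall F : set E, linear_subspace F -> (exists2 x, F x & x <> 0) ->
    forall M : R, exists x y, [/\ F x, F y & M < d x y].

Definition sum_condition : Prop :=
  forall C1 : R, 1 < C1 -> exists2 C0 : R, 0 <= C0 &
    forall (n : nat) (x y : 'I_n -> E), (2 <= n)%N ->
      d (\sum_(i < n) x i) (\sum_(i < n) y i)
        <= C1 * \sum_(i < n) d (x i) (y i) + n%:R * C0.

Definition unit_sphere : set KT := [set u | sc_abs u = 1].

(* mu is the right-invariant Haar probability measure on U (viewed as a *)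
(* Borel probability measure on K carried by U)                         *)
Definition right_haar_probability (mu : probability KT R) : Prop :=
  mu unit_sphere = 1%E /\
  forall u, unit_sphere u -> forall A : set KT, measurable A ->
    mu ((fun v => sc_mul v u) @^-1` A) = mu A.

Definition d0 (mu : probability KT R) (x y : E) : R :=
  Rintegral mu unit_sphere (fun u => d (act u x) (act u y)).

Definition delta0_seq (mu : probability KT R) (x y : E) : R^nat :=
  fun n => (n%:R)^-1 * d0 mu (x *+ n) (y *+ n).

Definition delta0 (mu : probability KT R) (x y : E) : R :=
  limn (delta0_seq mu x y).

Definition is_norm (N : E -> R) : Prop :=
  [/\ forall x, 0 <= N x,
      forall x, N x = 0 <-> x = 0,
      forall a x, N (act a x) = sc_abs a * N x &
      forall x y, N (x + y) <= N x + N y].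

End Defs.

Definition asymptotically_isometric (R : realType) (T : Type)
    (rho sigma : T -> T -> R) : Prop :=
  forall A : R, 1 < A -> exists2 B : R, 0 <= B &
    forall x y, A^-1 * sigma x y - B <= rho x y /\ rho x y <= A * sigma x y + B.

(* Main.v *)
Require Import Defs.
From mathcomp Require Import all_boot all_order all_algebra.
From mathcomp Require Import all_classical all_reals all_analysis.
From mathcomp Require Import ring lra measurable_realfun.
Import Order.TTheory GRing.Theory Num.Theory numFieldTopology.Exports numFieldNormedType.Exports.
Local Open Scope ring_scope.
Local Open Scope classical_set_scope.
Set Implicit Arguments. Unset Strict Implicit. Unset Printing Implicit Defensive.

Section RealLemmas.
Variable R : realType.

Lemma le_forall_gt1 (p q : R) : 0 <= q -> (forall C, 1 < C -> p <= C * q) -> p <= q.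
Proof.
move=> q0 H; rewrite leNgt; apply/negP => qp.
have [qe|qpos] := eqVneq q 0.
  by move: (H 2 (ltr1n _ 2)); rewrite qe mulr0 leNgt; rewrite qe in qp; rewrite qp.
have qp0 : 0 < q by rewrite lt_def qpos q0.
have h1 : 1 < (p + q) / (2 * q) by rewrite ltr_pdivlMr ?mulr_gt0 //; lra.
have := H _ h1.
have -> : (p + q) / (2 * q) * q = (p + q) / 2 by field.
move=> hh; lra.
Qed.

Lemma eventually_small (B e : R) : 0 < e -> \forall n \near \oo, `|B| / n%:R <= e.
Proof.
move=> e0; exists (Num.truncn (`|B| / e)).+1 => // n /= Hn.
have n0 : (0 < n)%N by apply: leq_trans Hn.
rewrite ler_pdivrMr ?ltr0n // -ler_pdivrMl //.
apply: ltW; apply: lt_le_trans (truncnS_gt _) _.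
by rewrite mulrC ler_nat.
Qed.

Lemma lim_ineq (u v : R^nat) (l l' A A' K B : R) :
  u @ \oo --> l -> v @ \oo --> l' ->
  (forall n, (0 < n)%N -> A * u n <= A' * v n + K + B / n%:R) ->
  A * l <= A' * l' + K.
Proof.
move=> ul vl H.
have w_cvg : (fun n => A' * v n + K - A * u n) @ \oo --> A' * l' + K - A * l.
  apply: cvgB; last exact: cvgMr.
  by apply: cvgD; [exact: cvgMr| exact: cvg_cst].
rewrite -subr_ge0; apply/ler_addgt0Pr => e e0; rewrite -lerBlDr sub0r.
apply: (cvgr_to_ge w_cvg).
near=> n.
have n0 : (0 < n)%N by near: n; exists 1%N.
have := H n n0 => h.
have hb : B / n%:R <= `|B| / n%:R by rewrite ler_wpM2r ?invr_ge0 ?ler0n ?ler_norm.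
have : `|B| / n%:R <= e.
by near: n; exact: eventually_small.
move=> he; lra.
Unshelve. all: by end_near. Qed.

End RealLemmas.

Section RealLemmas2.
Variable R : realType.

Lemma exists_big (B e : R) : 0 < e -> exists N, (0 < N)%N /\ forall n, (N <= n)%N -> `|B| / n%:R <= e.
Proof.
move=> e0; exists (Num.truncn (`|B| / e)).+1; split => // n Hn.
have n0 : (0 < n)%N by apply: leq_trans Hn.
rewrite ler_pdivrMr ?ltr0n // -ler_pdivrMl //.
apply: ltW; apply: lt_le_trans (truncnS_gt _) _.
by rewrite mulrC ler_nat.
Qed.

Lemma seq_cvg (a : nat -> R) :
  (forall n, 0 <= a n) ->
  (forall C1, 1 < C1 -> exists C2 C3, [/\ 0 <= C2, 0 <= C3 &
     forall m k, (0 < m)%N ->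
       C1^-1 * (k%:R / m%:R) * a m - C2 * (k%:R / m%:R) - C3 <= a k /\
       a k <= C1 * (k%:R / m%:R) * a m + C2 * (k%:R / m%:R) + C3]) ->
  cvgn (fun n => n%:R^-1 * a n).
Proof.
move=> a0 HAM.
pose b n := n%:R^-1 * a n.
have b0 n : 0 <= b n by rewrite /b mulr_ge0 ?invr_ge0 ?ler0n.
have Hb C1 : 1 < C1 -> exists C2 C3, [/\ 0 <= C2, 0 <= C3 &
     forall m k, (0 < m)%N -> (0 < k)%N ->
       C1^-1 * b m - C2 / m%:R - C3 / k%:R <= b k /\
       b k <= C1 * b m + C2 / m%:R + C3 / k%:R].
  move=> C1gt; have C10 : C1 != 0 by rewrite gt_eqF // (lt_trans ltr01 C1gt).
  move: C1gt => /HAM [C2 [C3 [C20 C30 H]]]; exists C2, C3; split => // m k m0 k0.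
  have [h1 h2] := H m k m0.
  have k0' : k%:R != 0 :> R by rewrite pnatr_eq0 -lt0n.
  have m0' : m%:R != 0 :> R by rewrite pnatr_eq0 -lt0n.
  have kp : 0 <= k%:R^-1 :> R by rewrite invr_ge0 ler0n.
  split.
    have := ler_wpM2l kp h1.
    have -> : k%:R^-1 * (C1^-1 * (k%:R / m%:R) * a m - C2 * (k%:R / m%:R) - C3)
       = C1^-1 * b m - C2 / m%:R - C3 / k%:R by rewrite /b; field; rewrite ?k0' ?m0' ?C10.
    by [].
  have := ler_wpM2l kp h2.
  have -> : k%:R^-1 * (C1 * (k%:R / m%:R) * a m + C2 * (k%:R / m%:R) + C3)
     = C1 * b m + C2 / m%:R + C3 / k%:R by rewrite /b; field; rewrite ?k0' ?m0' ?C10.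
  by [].
have [Bd [Bd0 HBd]] : exists Bd, 0 <= Bd /\ forall k, (0 < k)%N -> b k <= Bd.
  have [C2 [C3 [C20 C30 H]]] := Hb 2 (ltr1n _ 2).
  exists (2 * b 1 + C2 + C3); split; first by rewrite !addr_ge0 ?mulr_ge0.
  move=> k k0; have [_ h] := H 1%N k isT k0.
  apply: (le_trans h); rewrite divr1 lerD2l.
  by rewrite ler_pdivrMr ?ltr0n // ler_peMr // ler1n.
suff : cauchy (b @ \oo) by exact: cauchy_cvg.
apply: cauchy_exP => e e0.
rewrite /fmapE -ball_normE /ball_.
pose t := e / (4 * (Bd + 1)).
have t0 : 0 < t by rewrite divr_gt0 // mulr_gt0 // ltr_pwDr.
have tBd : t * Bd <= e / 4.
  have e1 : t * (Bd + 1) = e / 4.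
    rewrite /t; field; rewrite gt_eqF //; lra.
  have : t * Bd <= t * (Bd + 1) by rewrite ler_wpM2l ?ltW //; lra.
  by rewrite e1.
have [C2 [C3 [C20 C30 H]]] := Hb (1 + t) ltac:(lra).
have [m [m0 Hm]] := @exists_big C2 (e / 4) ltac:(lra).
have [M [M0 HM]] := @exists_big C3 (e / 4) ltac:(lra).
exists (b m), M => // k Mk.
have k0 : (0 < k)%N by apply: leq_trans Mk.
have [hl hu] := H m k (m0) k0.
have hm := Hm m (leqnn m); rewrite ger0_norm // in hm.
have hk := HM k Mk; rewrite ger0_norm // in hk.
have hbm := HBd m m0.
have hbm0 := b0 m.
have inv1 : 1 - t <= (1 + t)^-1.
  have tp : 0 < 1 + t by lra.
  rewrite -(ler_pM2l tp) mulfV ?gt_eqF //; nra.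
have hi : (1 - t) * b m <= (1 + t)^-1 * b m by rewrite ler_wpM2r.
have htb : t * b m <= t * Bd by rewrite ler_wpM2l ?(ltW t0).
rewrite /= in hl hu |- *.
rewrite ltr_norml; apply/andP; split; nra.
Qed.

End RealLemmas2.

Section IntHelpers.
Context d (T : measurableType d) (R : realType) (mu : probability T R) (U : set T).
Hypothesis mU : measurable U.
Hypothesis muU : mu U = 1%E.

Definition intU (f : T -> R) := mu.-integrable U (EFin \o f).

Lemma RintC c : Rintegral mu U (fun _ => c) = c.
Proof. rewrite Rintegral_cst // (_ : fine _ = 1) ?mulr1 //. by have /= -> := muU. Qed.

Lemma int_cst c : intU (fun _ => c).
Proof. exact: finite_measure_integrable_cst. Qed.

Lemma int_bdd (g : T -> R) : measurable_fun U g -> (exists M, forall u, U u -> `|g u| <= M) ->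
  intU g.
Proof.
move=> mg [M HM]; apply: (le_integrable mU _ _ (int_cst M)).
- exact/measurable_EFinP.
- move=> u Uu /=; rewrite lee_fin (le_trans (HM u Uu)) //.
  exact: ler_norm.
Qed.

Lemma int_add f g : intU f -> intU g -> intU (fun u => f u + g u).
Proof.
move=> hf hg; apply: (eq_integrable mU _ _ _ (integrableD mU hf hg)) => u _ /=.
by rewrite EFinD.
Qed.

Lemma int_scale f a : intU f -> intU (fun u => a * f u).
Proof.
move=> hf; apply: (eq_integrable mU _ _ _ (integrableZl mU a hf)) => u _ /=.
by rewrite EFinM.
Qed.

Lemma int_affine f a b : intU f -> intU (fun u => a * f u + b).
Proof. by move=> hf; apply: int_add; [exact: int_scale|exact: int_cst]. Qed.

Lemma Rint_add f g : intU f -> intU g ->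
  Rintegral mu U (fun u => f u + g u) = Rintegral mu U f + Rintegral mu U g.
Proof. by move=> hf hg; rewrite RintegralD. Qed.

Lemma Rint_affine f a b : intU f ->
  Rintegral mu U (fun u => a * f u + b) = a * Rintegral mu U f + b.
Proof.
move=> hf; rewrite Rint_add ?RintC //; last exact: int_cst; last exact: int_scale.
by rewrite RintegralZl.
Qed.

Lemma Rint_le f g : intU f -> intU g -> (forall u, U u -> f u <= g u) ->
  Rintegral mu U f <= Rintegral mu U g.
Proof. by move=> hf hg H; apply: le_Rintegral. Qed.

End IntHelpers.

Definition kcont (R : realType) (K : scalars R) (g : sc_type K -> R) : Prop :=
  forall a (e : R), 0 < e -> exists2 del : R, 0 < del &
    forall b, kdist a b < del -> `|g a - g b| < e.

Section Core.
Variables (R : realType) (K : scalars R) (E : zmodType).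
Notation KT := (sc_type K).
Variables (act : KT -> E -> E) (d : E -> E -> R) (mu : probability KT R) (iota : R -> KT).
Notation U := (@unit_sphere R K).

Hypothesis Hmvs : metric_vector_space act d.
Hypothesis Ham : asymptotically_multiplicative act d.
Hypothesis Hub : unbounded_on_nontrivial_subspaces act d.
Hypothesis Hsc : sum_condition d.
Hypothesis HmuU : mu U = 1%E.
Hypothesis Hzero : sc_add (sc_zero K) (sc_zero K) = sc_zero K.
Hypothesis Hopp : forall b, sc_add b (sc_opp b) = sc_zero K.
Hypothesis Habs0 : forall a : KT, 0 <= sc_abs a.
Hypothesis Hconj : forall u, U u -> forall l, exists l', sc_abs l' = sc_abs l /\ sc_mul u l = sc_mul l' u.
Hypothesis Hiabs : forall t, sc_abs (iota t) = `|t|.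
Hypothesis Himul : forall s t, sc_mul (iota s) (iota t) = iota (s * t).
Hypothesis Hiadd : forall s t, iota (s + t) = sc_add (iota s) (iota t).
Hypothesis Hi1 : iota 1 = sc_one K.
Hypothesis HmU : measurable U.
Hypothesis Hmeas : forall g : KT -> R, kcont g -> measurable_fun U g.

Let Hmod := let: And4 h _ _ _ := Hmvs in h.
Let Hmet := let: And4 _ h _ _ := Hmvs in h.
Let Hsmul := let: And4 _ _ _ h := Hmvs in h.

Lemma act_add a x y : act a (x + y) = act a x + act a y.
Proof. by case: Hmod. Qed.
Lemma act_scadd a b x : act (sc_add a b) x = act a x + act b x.
Proof. by case: Hmod. Qed.
Lemma act_scmul a b x : act (sc_mul a b) x = act a (act b x).
Proof. by case: Hmod. Qed.
Lemma act1 x : act (sc_one K) x = x.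
Proof. by case: Hmod. Qed.

Lemma act0r a : act a 0 = 0.
Proof.
have := act_add a 0 0; rewrite addr0 => h.
by apply: (@addrI _ (act a 0)); rewrite addr0 -h.
Qed.

Lemma act_zero x : act (sc_zero K) x = 0.
Proof.
have := act_scadd (sc_zero K) (sc_zero K) x; rewrite Hzero => h.
by apply: (@addrI _ (act (sc_zero K) x)); rewrite addr0 -h.
Qed.

Lemma act_opp b x : act (sc_opp b) x = - act b x.
Proof.
have := act_scadd b (sc_opp b) x; rewrite Hopp act_zero => /eqP.
by rewrite eq_sym addrC addr_eq0 => /eqP.
Qed.

Lemma actMn a x n : act a (x *+ n) = (act a x) *+ n.
Proof. by elim: n => [|n IH]; rewrite ?mulr0n ?act0r // !mulrS act_add IH. Qed.

Lemma act_iota0 x : act (iota 0) x = 0.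
Proof.
have := act_scadd (iota 0) (iota 0) x; rewrite -Hiadd addr0 => h.
by apply: (@addrI _ (act (iota 0) x)); rewrite addr0 -h.
Qed.

Lemma act_iotan n x : act (iota n%:R) x = x *+ n.
Proof.
elim: n => [|n IH]; first by rewrite act_iota0.
have -> : n.+1%:R = n%:R + 1 :> R by rewrite -addn1 natrD.
by rewrite Hiadd act_scadd IH Hi1 act1 mulrSr.
Qed.

Lemma d_ge0 x y : 0 <= d x y. Proof. by case: Hmet. Qed.
Lemma d_xx x : d x x = 0. Proof. by case: Hmet => _ h _ _; apply/h. Qed.
Lemma d_sym x y : d x y = d y x. Proof. by case: Hmet. Qed.
Lemma d_tri x y z : d x z <= d x y + d y z. Proof. by case: Hmet. Qed.

Lemma d_lip p q p' q' : `|d p q - d p' q'| <= d p p' + d q q'.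
Proof.
have h1 := d_tri p p' q; have h2 := d_tri p' q' q.
have h3 := d_tri p' p q'; have h4 := d_tri p q q'.
rewrite (d_sym q' q) in h2; rewrite (d_sym p' p) in h3.
rewrite ler_norml; apply/andP; split; lra.
Qed.

Definition fxy x y := fun u : KT => d (act u x) (act u y).

Lemma fxy_cont x y : kcont (fxy x y).
Proof.
move=> a e e0.
have e2 : 0 < e / 2 by rewrite divr_gt0.
have [del1 del10 H1] := Hsmul a x e2.
have [del2 del20 H2] := Hsmul a y e2.
exists (Num.min del1 del2); first by rewrite lt_min del10 del20.
move=> b; rewrite lt_min => /andP[hb1 hb2].
have h1 := H1 b x hb1 ltac:(by rewrite d_xx).
have h2 := H2 b y hb2 ltac:(by rewrite d_xx).
apply: (le_lt_trans (d_lip _ _ _ _)); lra.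
Qed.

Lemma fxy_meas x y : measurable_fun U (fxy x y).
Proof. exact/Hmeas/fxy_cont. Qed.

Lemma fxy_bdd x y : exists M, forall u, U u -> `|fxy x y u| <= M.
Proof.
have [C2 [C3 [C20 C30 H]]] := Ham (ltr1n R 2).
exists (2 * d x y + C2 + C3) => u Uu.
have [_ h] := H u x y; move: h; rewrite Uu mulr1 mulr1 => h.
by rewrite ger0_norm ?d_ge0.
Qed.

Lemma fxy_int x y : intU mu U (fxy x y).
Proof. apply: int_bdd => //; [exact: fxy_meas | exact: fxy_bdd]. Qed.

Notation D0 := (d0 act d mu).

Lemma d0E x y : D0 x y = Rintegral mu U (fxy x y).
Proof. by []. Qed.

Lemma d0_ge0 x y : 0 <= D0 x y.
Proof. by apply: Rintegral_ge0 => u _; exact: d_ge0. Qed.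

Lemma d0_xx x : D0 x x = 0.
Proof.
rewrite d0E (_ : Rintegral mu U (fxy x x) = Rintegral mu U (fun _ => 0)).
  exact: RintC.
by apply: eq_Rintegral => u _; rewrite /fxy d_xx.
Qed.

Lemma d0_AM C1 : 1 < C1 -> exists C2 C3, [/\ 0 <= C2, 0 <= C3 &
  forall l x y,
    C1^-1 * sc_abs l * D0 x y - C2 * sc_abs l - C3 <= D0 (act l x) (act l y)
    /\ D0 (act l x) (act l y) <= C1 * sc_abs l * D0 x y + C2 * sc_abs l + C3].
Proof.
move=> /Ham [C2 [C3 [C20 C30 H]]]; exists C2, C3; split => // l x y.
have key u : U u -> C1^-1 * sc_abs l * fxy x y u - C2 * sc_abs l - C3 <= fxy (act l x) (act l y) u
   /\ fxy (act l x) (act l y) u <= C1 * sc_abs l * fxy x y u + C2 * sc_abs l + C3.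
  move=> Uu; have [l' [hl' he]] := Hconj Uu l.
  rewrite /fxy -!act_scmul he !act_scmul -hl'; exact: H.
split.
  rewrite !d0E; under eq_Rintegral do rewrite -/(fxy _ _ _).
  have -> : C1^-1 * sc_abs l * Rintegral mu U (fxy x y) - C2 * sc_abs l - C3 =
    Rintegral mu U (fun u => (C1^-1 * sc_abs l) * fxy x y u + (- (C2 * sc_abs l) - C3)).
    by rewrite Rint_affine //; [lra | exact: fxy_int].
  apply: Rint_le => //; [exact/int_affine/fxy_int | exact: fxy_int |].
  move=> u Uu; have [h _] := key u Uu; lra.
rewrite !d0E.
have -> : C1 * sc_abs l * Rintegral mu U (fxy x y) + C2 * sc_abs l + C3 =
  Rintegral mu U (fun u => (C1 * sc_abs l) * fxy x y u + (C2 * sc_abs l + C3)).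
  by rewrite Rint_affine //; [lra | exact: fxy_int].
apply: Rint_le => //; [exact: fxy_int | exact/int_affine/fxy_int |].
move=> u Uu; have [_ h] := key u Uu; lra.
Qed.

Lemma d0_SC C1 : 1 < C1 -> exists2 C0 : R, 0 <= C0 &
  forall x1 x2 y1 y2, D0 (x1 + x2) (y1 + y2) <= C1 * (D0 x1 y1 + D0 x2 y2) + 2 * C0.
Proof.
move=> /Hsc [C0 C00 H]; exists C0 => // x1 x2 y1 y2.
have key u : fxy (x1 + x2) (y1 + y2) u <= C1 * (fxy x1 y1 u + fxy x2 y2 u) + 2 * C0.
  pose xs := fun i : 'I_2 => if i == ord0 then act u x1 else act u x2.
  pose ys := fun i : 'I_2 => if i == ord0 then act u y1 else act u y2.
  have := H 2%N xs ys isT.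
  by rewrite !big_ord_recr !big_ord0 /= !add0r /fxy !act_add.
rewrite !d0E.
have -> : C1 * (Rintegral mu U (fxy x1 y1) + Rintegral mu U (fxy x2 y2)) + 2 * C0 =
  Rintegral mu U (fun u => C1 * (fxy x1 y1 u + fxy x2 y2 u) + 2 * C0).
  rewrite (Rint_affine HmU HmuU _ _ (int_add HmU (fxy_int _ _) (fxy_int _ _))).
  by rewrite (Rint_add HmU (fxy_int _ _) (fxy_int _ _)).
apply: Rint_le => //; first exact: fxy_int.
by apply: (int_affine HmU); apply: (int_add HmU); exact: fxy_int.
Qed.

Lemma d_d0 C1 : 1 < C1 -> exists2 B : R, 0 <= B &
  forall x y, C1^-1 * d x y - B <= D0 x y /\ D0 x y <= C1 * d x y + B.
Proof.
move=> /Ham [C2 [C3 [C20 C30 H]]]; exists (C2 + C3); first by rewrite addr_ge0.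
move=> x y; split.
  rewrite d0E -[X in X <= _](RintC HmU HmuU).
  apply: Rint_le => //; [exact: int_cst | exact: fxy_int |].
  move=> u Uu; have [h _] := H u x y; move: h; rewrite Uu !mulr1 => h; rewrite /fxy /=; lra.
rewrite d0E -[X in _ <= X](RintC HmU HmuU).
apply: Rint_le => //; [exact: fxy_int | exact: int_cst |].
move=> u Uu; have [_ h] := H u x y; move: h; rewrite Uu !mulr1 => h; rewrite /fxy /=; lra.
Qed.

Lemma eqle (p q : R) : p = q -> p <= q. Proof. by move->. Qed.

Lemma mulinv_le (n : nat) (p q : R) : p <= q -> n%:R^-1 * p <= n%:R^-1 * q.
Proof. by move=> h; rewrite ler_wpM2l // invr_ge0 ler0n. Qed.

Notation DS x y := (delta0_seq act d mu x y).
Notation Dl := (delta0 act d mu).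

Lemma DSE x y n : DS x y n = n%:R^-1 * D0 (x *+ n) (y *+ n).
Proof. by []. Qed.

Lemma DS_cvg x y : cvgn (DS x y).
Proof.
apply: (@seq_cvg R (fun n => D0 (x *+ n) (y *+ n))); first by move=> n; exact: d0_ge0.
move=> C1 /d0_AM [C2 [C3 [C20 C30 H]]]; exists C2, C3; split => // m k m0.
have := H (iota (k%:R / m%:R)) (x *+ m) (y *+ m).
rewrite Hiabs ger0_norm ?divr_ge0 ?ler0n //.
rewrite -(act_iotan m x) -(act_iotan m y) -!act_scmul Himul divfK ?pnatr_eq0 -?lt0n //.
by rewrite !act_iotan.
Qed.

Lemma DS_lim x y : DS x y @ \oo --> Dl x y.
Proof. exact: DS_cvg. Qed.

Lemma Dl_ge0 x y : 0 <= Dl x y.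
Proof.
have := @lim_ineq R (fun _ => 0) (DS x y) 0 (Dl x y) 1 1 0 0 (cvg_cst 0) (@DS_lim x y).
rewrite mulr0 mul1r addr0; apply => n n0.
by rewrite !mul1r mul0r !addr0 DSE mulr_ge0 ?invr_ge0 ?ler0n ?d0_ge0.
Qed.

Lemma Dl_trans x y z : Dl (x + z) (y + z) = Dl x y.
Proof.
have le1 x' y' z' : Dl (x' + z') (y' + z') <= Dl x' y'.
  apply: le_forall_gt1 (Dl_ge0 x' y') _ => C1 C1gt.
  have [C0 C00 H] := d0_SC C1gt.
  have := @lim_ineq R (DS (x' + z') (y' + z')) (DS x' y') _ _ 1 C1 0 (2 * C0)
    (@DS_lim _ _) (@DS_lim _ _).
  rewrite mul1r addr0; apply => n n0.
  have h := H (x' *+ n) (z' *+ n) (y' *+ n) (z' *+ n); rewrite d0_xx addr0 in h.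
  rewrite !DSE !mulrnDl mul1r addr0.
  apply: le_trans (mulinv_le n h) _; apply: eqle; ring.
apply/le_anti/andP; split; first exact: le1.
by have := le1 (x + z) (y + z) (- z); rewrite !addrK.
Qed.

Lemma Dl_N x y : Dl x y = Dl (x - y) 0.
Proof. by rewrite -(Dl_trans (x - y) 0 y) subrK add0r. Qed.

Lemma Dl00 : Dl 0 0 = 0.
Proof.
apply/le_anti/andP; split; last exact: Dl_ge0.
have := @lim_ineq R (DS 0 0) (fun _ => 0) (Dl 0 0) 0 1 0 0 0 (@DS_lim 0 0) (cvg_cst 0).
rewrite mul1r mul0r addr0; apply => n n0.
rewrite DSE mul0rn d0_xx; lra.
Qed.

Lemma DS_act a x y n : DS (act a x) (act a y) n = n%:R^-1 * D0 (act a (x *+ n)) (act a (y *+ n)).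
Proof. by rewrite DSE !actMn. Qed.

Lemma Dl_homog a x : Dl (act a x) 0 = sc_abs a * Dl x 0.
Proof.
have -> : Dl (act a x) 0 = Dl (act a x) (act a 0) by rewrite act0r.
apply/le_anti/andP; split.
  apply: le_forall_gt1; first by rewrite mulr_ge0 ?Dl_ge0.
  move=> C1 /d0_AM [C2 [C3 [C20 C30 H]]].
  have := @lim_ineq R (DS (act a x) (act a 0)) (DS x 0) _ _ 1 (C1 * sc_abs a) 0
    (C2 * sc_abs a + C3) (@DS_lim _ _) (@DS_lim _ _).
  rewrite mul1r addr0 mulrA; apply => n n0.
  have [_ h] := H a (x *+ n) (0 *+ n).
  rewrite DS_act DSE mul1r addr0.
  apply: le_trans (mulinv_le n h) _; apply: eqle; ring.
apply: le_forall_gt1; first by rewrite Dl_ge0.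
move=> C1 C1gt; have [C2 [C3 [C20 C30 H]]] := d0_AM C1gt.
have := @lim_ineq R (DS x 0) (DS (act a x) (act a 0)) _ _ (C1^-1 * sc_abs a) 1 0
  (C2 * sc_abs a + C3) (@DS_lim _ _) (@DS_lim _ _).
rewrite mul1r addr0 => hh.
have C10 : 0 < C1 by apply: lt_trans C1gt.
have C1nz : C1 != 0 by rewrite gt_eqF.
have C1i : 0 < C1^-1 by rewrite invr_gt0.
rewrite -(ler_pM2l C1i) mulrA mulKf ?gt_eqF //; apply: hh => n n0.
have [h _] := H a (x *+ n) (0 *+ n).
rewrite DS_act DSE mul1r addr0.
have h' := mulinv_le n h.
have n0' : n%:R != 0 :> R by rewrite pnatr_eq0 -lt0n.
suff : n%:R^-1 * (C1^-1 * sc_abs a * D0 (x *+ n) (0 *+ n) - C2 * sc_abs a - C3) =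
  C1^-1 * sc_abs a * (n%:R^-1 * D0 (x *+ n) (0 *+ n)) - (C2 * sc_abs a + C3) / n%:R.
  move=> e; rewrite e in h'; lra.
by field; rewrite ?n0' ?C1nz.
Qed.

Lemma Dl_tri x y : Dl (x + y) 0 <= Dl x 0 + Dl y 0.
Proof.
apply: le_forall_gt1; first by rewrite addr_ge0 ?Dl_ge0.
move=> C1 /d0_SC [C0 C00 H].
have := @lim_ineq R (DS (x + y) 0) (fun n => DS x 0 n + DS y 0 n) _ _ 1 C1 0 (2 * C0)
  (@DS_lim _ _) (cvgD (@DS_lim x 0) (@DS_lim y 0)).
rewrite mul1r addr0; apply => n n0.
have h := H (x *+ n) (y *+ n) (0 *+ n) (0 *+ n); rewrite !mul0rn addr0 in h.
rewrite !DSE !mul0rn mulrnDl mul1r addr0.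
apply: le_trans (mulinv_le n h) _; apply: eqle; ring.
Qed.

Lemma Dl_d0 C1 : 1 < C1 -> exists2 B : R, 0 <= B &
  forall x y, C1^-1 * D0 x y - B <= Dl x y /\ Dl x y <= C1 * D0 x y + B.
Proof.
move=> C1gt; have [C2 [C3 [C20 C30 H]]] := d0_AM C1gt.
have C10 : C1 != 0 by rewrite gt_eqF // (lt_trans ltr01 C1gt).
exists C2 => // x y; split.
  have := @lim_ineq R (fun _ => D0 x y) (DS x y) _ _ C1^-1 1 C2 C3 (cvg_cst _) (@DS_lim _ _).
  rewrite mul1r => hh; suff : C1^-1 * D0 x y <= Dl x y + C2 by lra.
  apply: hh => n n0.
  have [h _] := H (iota n%:R) x y.
  rewrite Hiabs ger0_norm ?ler0n // !act_iotan in h.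
  have h' := mulinv_le n h.
  have n0' : n%:R != 0 :> R by rewrite pnatr_eq0 -lt0n.
  rewrite DSE mul1r.
  suff : n%:R^-1 * (C1^-1 * n%:R * D0 x y - C2 * n%:R - C3) =
    C1^-1 * D0 x y - C2 - C3 / n%:R.
    move=> e; rewrite e in h'; lra.
  by field; rewrite ?n0' ?C10.
have := @lim_ineq R (DS x y) (fun _ => D0 x y) _ _ 1 C1 C2 C3 (@DS_lim _ _) (cvg_cst _).
rewrite mul1r; apply => n n0.
have [_ h] := H (iota n%:R) x y.
rewrite Hiabs ger0_norm ?ler0n // !act_iotan in h.
have h' := mulinv_le n h.
have n0' : n%:R != 0 :> R by rewrite pnatr_eq0 -lt0n.
rewrite DSE mul1r.
apply: le_trans h' _; apply: eqle; by field; rewrite ?n0' ?C10.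
Qed.

Theorem core_thm :
  let delta := delta0 act d mu in
  let N := fun x => delta x 0 in
  [/\ (forall x y, cvgn (delta0_seq act d mu x y)),
      (forall x y z, delta (x + z) (y + z) = delta x y),
      (forall x y, delta x y = N (x - y)) &
      is_norm act N] /\
  asymptotically_isometric (fun x y => N (x - y)) (d0 act d mu) /\
  asymptotically_isometric (fun x y => N (x - y)) d.
Proof.
move=> delta N.
have isoD0 : asymptotically_isometric (fun x y => N (x - y)) D0.
  move=> A A1; have [B B0 H] := Dl_d0 A1; exists B => // x y.
  by rewrite /N /delta -Dl_N; exact: H.
have isoD : asymptotically_isometric (fun x y => N (x - y)) d.
  move=> A A1.
  pose C := Num.sqrt A.
  have C0 : 0 <= C by exact: sqrtr_ge0.
  have CC : C * C = A by rewrite -expr2 sqr_sqrtr // ltW // (lt_trans ltr01 A1).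
  have C1 : 1 < C by nra.
  have [B1 B10 H1] := Dl_d0 C1; have [B2 B20 H2] := d_d0 C1.
  exists (C * B2 + B1); first by rewrite addr_ge0 // mulr_ge0.
  move=> x y; rewrite /N /delta -Dl_N; have [l1 u1] := H1 x y; have [l2 u2] := H2 x y.
  have Cp : 0 < C by lra.
  have ci0 : 0 <= C^-1 by rewrite invr_ge0.
  have ciC : C^-1 * C = 1 by rewrite mulVf // gt_eqF.
  have Ai : A^-1 = C^-1 * C^-1 by rewrite -CC invfM.
  have hdi := d_ge0 x y.
  split.
    have m2 := ler_wpM2l ci0 l2.
    have hci1 : C^-1 <= 1 by rewrite invf_le1 // ltW.
    have hci : C^-1 <= C by lra.
    have m3 : C^-1 * B2 <= C * B2 by rewrite ler_wpM2r.
    rewrite Ai; nra.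
  have m2 := ler_wpM2l C0 u2.
  rewrite -CC; nra.
split; last by split.
split.
- exact: DS_cvg.
- exact: Dl_trans.
- exact: Dl_N.
split.
- by move=> x; exact: Dl_ge0.
- move=> x; split; last by move=> ->; exact: Dl00.
  move=> Nx0; apply: contrapT => xn0.
  pose F := [set z | exists a, z = act a x].
  have lsF : linear_subspace act F.
    split.
    + by exists (sc_zero K); rewrite act_zero.
    + by move=> _ _ [a ->] [b ->]; exists (sc_add a b); rewrite act_scadd.
    + by move=> c _ [a ->]; exists (sc_mul c a); rewrite act_scmul.
  have ntF : exists2 z, F z & z <> 0 by exists x => //; exists (sc_one K); rewrite act1.
  have [B B0 HB] := isoD 2 (ltr1n R 2).
  have [p [q [[a ->] [b ->] hd]]] := Hub lsF ntF (2 * B).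
  have [l _] := HB (act a x) (act b x).
  have : N (act a x - act b x) = 0.
    have Nx0' : Dl x 0 = 0 by exact: Nx0.
    by rewrite -act_opp -act_scadd /N /delta Dl_homog Nx0' mulr0.
  move=> e; rewrite e in l; lra.
- by move=> a x; exact: Dl_homog.
- by move=> x y; exact: Dl_tri.
Qed.

End Core.

Definition kopen (R : realType) (K : scalars R) (O : set (sc_type K)) : Prop :=
  forall u, O u -> exists2 e : R, 0 < e & forall v, kdist u v < e -> O v.

Lemma kcont_meas (R : realType) (K : scalars R) (D : set (sc_type K)) :
  measurable D -> (forall O : set (sc_type K), kopen O -> measurable O) ->
  forall g, kcont g -> measurable_fun D g.
Proof.
move=> mD Hko g gc; apply: (measurability _ (RGenOpens.measurableE R)).
move=> _ [_ [a [b ->] <-]]; apply: measurableI => //; apply: Hko.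
move=> u /=; rewrite in_itv /= => /andP[au ub].
have e0 : 0 < Num.min (g u - a) (b - g u) by rewrite lt_min !subr_gt0 au ub.
have [del del0 H] := gc u _ e0.
exists del => // v /H; rewrite lt_min => /andP[h1 h2].
rewrite /= in_itv /=; move: h1 h2; rewrite ltr_norml => /andP[h1 h1'] h2.
apply/andP; split; rewrite ltr_norml in h2; move/andP: h2 => [h2 h2']; lra.
Qed.

Section RatHelpers.
Variable R : realType.

Lemma rat_near (x r : R) : 0 < r -> exists q : rat, `|x - ratr q| < r.
Proof.
move=> r0; have h : x - r < x + r by lra.
have [q] := rat_in_itvoo h; rewrite in_itv /= => /andP[h1 h2]; exists q.
rewrite ltr_norml; apply/andP; split; lra.
Qed.

Lemma rat_small (e : R) : 0 < e -> exists r : rat, 0 < (ratr r : R) /\ (ratr r : R) < e.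
Proof.
move=> e0; have [r] := rat_in_itvoo e0; rewrite in_itv /= => /andP[h1 h2].
by exists r.
Qed.

Lemma sq_small (a b c r : R) : `|a - c| < r -> `|b - c| < r -> (a - b) ^+ 2 < 4 * r ^+ 2.
Proof.
rewrite !ltr_norml => /andP[h1 h2] /andP[h3 h4]; nra.
Qed.

Lemma sqrt_lt (S e : R) : 0 < e -> S < e ^+ 2 -> Num.sqrt S < e.
Proof.
move=> e0 h; rewrite -[X in _ < X]ger0_norm ?ltW // -sqrtr_sqr ltr_sqrt //.
by rewrite exprn_gt0.
Qed.

End RatHelpers.

Section ComplexCase.
Variable R : realType.
Notation KC := (complex_scalars R).

Lemma c_kdistE (u v : R * R) :
  kdist (K := KC) u v = Num.sqrt ((u.1 - v.1) ^+ 2 + (u.2 - v.2) ^+ 2).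
Proof. by []. Qed.

Lemma c_kopen_meas (O : set (sc_type KC)) : kopen O -> measurable O.
Proof.
move=> HO.
pose box (q1 q2 r : rat) : set (R * R) :=
  `](ratr q1 - ratr r), (ratr q1 + ratr r)[ `*` `](ratr q2 - ratr r), (ratr q2 + ratr r)[.
pose F q1 q2 r := [set v | box q1 q2 r v /\ box q1 q2 r `<=` O].
have -> : O = \bigcup_q1 \bigcup_q2 \bigcup_r F q1 q2 r.
  apply/seteqP; split.
  - move=> u Ou; have [e e0 He] := HO u Ou.
    have e4 : 0 < e / 4 by rewrite divr_gt0.
    have [r [r0 re]] := rat_small e4.
    have [q1 h1] := rat_near u.1 r0; have [q2 h2] := rat_near u.2 r0.
    exists q1 => //; exists q2 => //; exists r => //.
    split.
    + rewrite /box /= !in_itv /=.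
      move: h1 h2; rewrite !ltr_norml => /andP[h1 h1'] /andP[h2 h2'].
      have a1 : ratr q1 - ratr r < u.1 by lra.
      have a2 : u.1 < ratr q1 + ratr r by lra.
      have a3 : ratr q2 - ratr r < u.2 by lra.
      have a4 : u.2 < ratr q2 + ratr r by lra.
      by rewrite a1 a2 a3 a4.
    + move=> v [/=]; rewrite !in_itv /= => /andP[hv1 hv1'] /andP[hv2 hv2'].
      apply: He; rewrite c_kdistE; apply: sqrt_lt => //.
      have hv1n : `|v.1 - ratr q1| < ratr r by rewrite ltr_norml; apply/andP; split; lra.
      have hv2n : `|v.2 - ratr q2| < ratr r by rewrite ltr_norml; apply/andP; split; lra.
      have s1 := sq_small h1 hv1n; have s2 := sq_small h2 hv2n.
      nra.
  - by move=> u [q1 _ [q2 _ [r _ [bu sub]]]]; apply: sub.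
apply: bigcupT_measurable_rat => q1; apply: bigcupT_measurable_rat => q2.
apply: bigcupT_measurable_rat => r; have [sub|nsub] := pselect (box q1 q2 r `<=` O).
  have -> : F q1 q2 r = box q1 q2 r by apply/seteqP; split => v /= [].
  by apply: measurableX; exact: measurable_itv.
by have -> : F q1 q2 r = set0 by apply/seteqP; split => v /= [].
Qed.

Lemma c_measU : measurable (@unit_sphere R KC).
Proof.
have mS : measurable_fun setT (fun u : R * R => u.1 ^+ 2 + u.2 ^+ 2).
  by apply: measurable_funD; apply: measurable_funX; [exact: measurable_fst | exact: measurable_snd].
have -> : @unit_sphere R KC = (fun u : R * R => u.1 ^+ 2 + u.2 ^+ 2) @^-1` [set 1].
  apply/seteqP; split => u /=.
    move=> h; rewrite -[LHS]sqr_sqrtr ?addr_ge0 ?sqr_ge0 //.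
    by move: h; rewrite /unit_sphere /= => ->; rewrite expr1n.
  by rewrite /unit_sphere /= => ->; rewrite sqrtr1.
rewrite -[X in measurable X]setTI; apply: mS => //; exact: measurable_set1.
Qed.

End ComplexCase.

Section QuatCase.
Variable R : realType.
Notation KQ := (quaternion_scalars R).

Lemma q_kdistE (u v : (R * R) * (R * R)) :
  kdist (K := KQ) u v = Num.sqrt ((u.1.1 - v.1.1) ^+ 2 + (u.1.2 - v.1.2) ^+ 2
     + (u.2.1 - v.2.1) ^+ 2 + (u.2.2 - v.2.2) ^+ 2).
Proof. by []. Qed.

Lemma q_kopen_meas (O : set (sc_type KQ)) : kopen O -> measurable O.
Proof.
move=> HO.
pose box (q1 q2 q3 q4 r : rat) : set ((R * R) * (R * R)) :=
  (`](ratr q1 - ratr r), (ratr q1 + ratr r)[ `*` `](ratr q2 - ratr r), (ratr q2 + ratr r)[)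
  `*` (`](ratr q3 - ratr r), (ratr q3 + ratr r)[ `*` `](ratr q4 - ratr r), (ratr q4 + ratr r)[).
pose F q1 q2 q3 q4 r := [set v | box q1 q2 q3 q4 r v /\ box q1 q2 q3 q4 r `<=` O].
have -> : O = \bigcup_q1 \bigcup_q2 \bigcup_q3 \bigcup_q4 \bigcup_r F q1 q2 q3 q4 r.
  apply/seteqP; split.
  - move=> u Ou; have [e e0 He] := HO u Ou.
    have e4 : 0 < e / 4 by rewrite divr_gt0.
    have [r [r0 re]] := rat_small e4.
    have [q1 h1] := rat_near u.1.1 r0; have [q2 h2] := rat_near u.1.2 r0.
    have [q3 h3] := rat_near u.2.1 r0; have [q4 h4] := rat_near u.2.2 r0.
    exists q1 => //; exists q2 => //; exists q3 => //; exists q4 => //; exists r => //.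
    split.
    + move: h1 h2 h3 h4; rewrite !ltr_norml => /andP[h1 h1'] /andP[h2 h2'] /andP[h3 h3'] /andP[h4 h4'].
      by split; split; rewrite /= in_itv /=; apply/andP; split; lra.
    + move=> v [[/= hv1 hv2] [/= hv3 hv4]].
      move: hv1 hv2 hv3 hv4; rewrite !in_itv /= => /andP[hv1 hv1'] /andP[hv2 hv2'] /andP[hv3 hv3'] /andP[hv4 hv4'].
      apply: He; rewrite q_kdistE; apply: sqrt_lt => //.
      have hv1n : `|v.1.1 - ratr q1| < ratr r by rewrite ltr_norml; apply/andP; split; lra.
      have hv2n : `|v.1.2 - ratr q2| < ratr r by rewrite ltr_norml; apply/andP; split; lra.
      have hv3n : `|v.2.1 - ratr q3| < ratr r by rewrite ltr_norml; apply/andP; split; lra.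
      have hv4n : `|v.2.2 - ratr q4| < ratr r by rewrite ltr_norml; apply/andP; split; lra.
      have s1 := sq_small h1 hv1n; have s2 := sq_small h2 hv2n.
      have s3 := sq_small h3 hv3n; have s4 := sq_small h4 hv4n.
      nra.
  - by move=> u [q1 _ [q2 _ [q3 _ [q4 _ [r _ [bu sub]]]]]]; apply: sub.
apply: bigcupT_measurable_rat => q1; apply: bigcupT_measurable_rat => q2.
apply: bigcupT_measurable_rat => q3; apply: bigcupT_measurable_rat => q4.
apply: bigcupT_measurable_rat => r; have [sub|nsub] := pselect (box q1 q2 q3 q4 r `<=` O).
  have -> : F q1 q2 q3 q4 r = box q1 q2 q3 q4 r by apply/seteqP; split => v /= [].
  by apply: measurableX; apply: measurableX; exact: measurable_itv.
by have -> : F q1 q2 q3 q4 r = set0 by apply/seteqP; split => v /= [].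
Qed.

Lemma q_measU : measurable (@unit_sphere R KQ).
Proof.
have m11 : measurable_fun setT (fun u : (R * R) * (R * R) => u.1.1).
  exact: (measurableT_comp measurable_fst measurable_fst).
have m12 : measurable_fun setT (fun u : (R * R) * (R * R) => u.1.2).
  exact: (measurableT_comp measurable_snd measurable_fst).
have m21 : measurable_fun setT (fun u : (R * R) * (R * R) => u.2.1).
  exact: (measurableT_comp measurable_fst measurable_snd).
have m22 : measurable_fun setT (fun u : (R * R) * (R * R) => u.2.2).
  exact: (measurableT_comp measurable_snd measurable_snd).
have mS : measurable_fun setT (fun u : (R * R) * (R * R) =>
    u.1.1 ^+ 2 + u.1.2 ^+ 2 + u.2.1 ^+ 2 + u.2.2 ^+ 2).
  by repeat apply: measurable_funD; apply: measurable_funX.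
have -> : @unit_sphere R KQ = (fun u : (R * R) * (R * R) =>
    u.1.1 ^+ 2 + u.1.2 ^+ 2 + u.2.1 ^+ 2 + u.2.2 ^+ 2) @^-1` [set 1].
  apply/seteqP; split => u /=.
    move=> h; rewrite -[LHS]sqr_sqrtr ?addr_ge0 ?sqr_ge0 //.
    by move: h; rewrite /unit_sphere /= /qabs => ->; rewrite expr1n.
  by rewrite /unit_sphere /= /qabs => ->; rewrite sqrtr1.
rewrite -[X in measurable X]setTI; apply: mS => //; exact: measurable_set1.
Qed.

End QuatCase.

Section RealCase.
Variable R : realType.
Notation KR := (real_scalars R).

Lemma r_kopen_meas (O : set (sc_type KR)) : kopen O -> measurable O.
Proof.
move=> HO; apply: open_measurable; rewrite openE => x Ox.
have [e e0 He] := HO x Ox.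
by apply/nbhs_ballP; exists e => // y; rewrite -ball_normE /= => h; apply: He.
Qed.

Lemma r_measU : measurable (@unit_sphere R KR).
Proof.
have -> : @unit_sphere R KR = (fun x : R => `|x|) @^-1` [set 1] by [].
rewrite -[X in measurable X]setTI; apply: normr_measurable => //; exact: measurable_set1.
Qed.

End RealCase.

Section Facts.
Variable R : realType.

Lemma q_conj (u l : (R * R) * (R * R)) : qabs u = 1 ->
  exists l', qabs l' = qabs l /\ qmul u l = qmul l' u.
Proof.
case: u => [[a b] [c e]]; case: l => [[p q] [r s]].
rewrite /qabs /= => hu.
have hN : a ^+ 2 + b ^+ 2 + c ^+ 2 + e ^+ 2 = 1.
  by rewrite -[LHS]sqr_sqrtr ?addr_ge0 ?sqr_ge0 // hu expr1n.
exists (qmul (qmul ((a, b), (c, e)) ((p, q), (r, s))) ((a, - b), (- c, - e))).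
split.
  rewrite /qabs /=; congr Num.sqrt.
  by rewrite -[RHS]mulr1 -[RHS]mulr1 -hN; ring.
by rewrite /=; congr ((_, _), (_, _)); rewrite -[LHS]mulr1 -hN; ring.
Qed.

End Facts.

Theorem proposition9 (R : realType) (k : scalar_kind) (E : zmodType)
  (act : sc_type (scal R k) -> E -> E) (d : E -> E -> R)
  (mu : probability (sc_type (scal R k)) R) :
  metric_vector_space act d ->
  asymptotically_multiplicative act d ->
  unbounded_on_nontrivial_subspaces act d ->
  sum_condition d ->
  right_haar_probability mu ->
  let delta := delta0 act d mu in
  let N := fun x => delta x 0 in
  [/\ (forall x y, cvgn (delta0_seq act d mu x y)),
      (forall x y z, delta (x + z) (y + z) = delta x y),
      (forall x y, delta x y = N (x - y)) &
      is_norm act N] /\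
  asymptotically_isometric (fun x y => N (x - y)) (d0 act d mu) /\
  asymptotically_isometric (fun x y => N (x - y)) d.
Proof.
move=> Hmvs Ham Hub Hsc [HmuU _].
move: act mu Hmvs Ham Hub Hsc HmuU; case: k => act mu Hmvs Ham Hub Hsc HmuU.
- apply: (@core_thm R _ E act d mu (fun t => t)) => //=.
  + by rewrite addr0.
  + by move=> b; rewrite subrr.
  + by move=> u _ l; exists l; split => //; rewrite mulrC.
  + exact: r_measU.
  + apply: (@kcont_meas R (real_scalars R)); first exact: r_measU.
    exact: r_kopen_meas.
- apply: (@core_thm R _ E act d mu (fun t => (t, 0))) => //=.
  + by rewrite addr0.
  + by move=> b; rewrite !subrr.
  + by move=> u _ l; exists l; split => //; rewrite /cmul; congr (_, _); ring.
  + by move=> t; rewrite expr0n /= addr0 sqrtr_sqr.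
  + by move=> s t; rewrite /cmul /=; congr (_, _); ring.
  + by move=> s t; rewrite addr0.
  + exact: c_measU.
  + apply: (@kcont_meas R (complex_scalars R)); first exact: c_measU.
    exact: c_kopen_meas.
- apply: (@core_thm R _ E act d mu (fun t => ((t, 0), (0, 0)))) => //=.
  + by rewrite /qadd /= !addr0.
  + by move=> b; rewrite /qadd /qopp /= !subrr.
  + by move=> a; exact: sqrtr_ge0.
  + by move=> u hu l; exact: q_conj.
  + by move=> t; rewrite /qabs /= expr0n /= !addr0 sqrtr_sqr.
  + by move=> s t; rewrite /qmul /=; congr ((_, _), (_, _)); ring.
  + by move=> s t; rewrite /qadd /= !addr0.
  + exact: q_measU.
  + apply: (@kcont_meas R (quaternion_scalars R)); first exact: q_measU.
    exact: q_kopen_meas.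
Qed.
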